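(* Let $X,Y$ be metric spaces, $X\times Y$ with the maximum metric, $\Delta$ a scale and $g,h$ Hausdorff functions. For any set $E\subseteq X\times Y$, $$\mathcal P^{gh}_{\Delta,0}(E)\ge\mathcal P^{h}_{\Delta}(X)\cdot\inf_{x\in X}\underline{\mathcal B}^{g}_0(E_x).$$
   Context: In a metric space $(X,d)$: $\operatorname{gap}F=\inf\{d(x,y):x,y\in F,x\neq y\}$, $C_\delta(E)=\sup\{|F|:F\subseteq E,\operatorname{gap}F>\delta\}$. A Hausdorff function is a nondecreasing $g:(0,\infty)\to(0,\infty)$; $gh$ is the pointwise product. A scale is a set $\Delta\subseteq(0,\infty)$ with $0$ in its closure. A packing is a family $\pi=\{(x_i,r_i):i\in I\}\subseteq X\times(0,\infty)$ with $d(x_i,x_j)>r_i$ for $i\ne j$; it is a packing of $E$ if all $x_i\in E$, $\Delta$-valued if all $r_i\in\Delta$, $\delta$-fine if all $r_i\le\delta$; $g(\pi)=\sum_ig(r_i)$. $\mathcal P^g_{\Delta,0}(E)=\inf_{\delta>0}\sup\{g(\pi):\pi$ a $\Delta$-valued $\delta$-fine packing of $E\}$; $\mathcal P^g_\Delta(E)=\inf\{\sum_n\mathcal P^g_{\Delta,0}(E_n):E\subseteq\bigcup_nE_n\}$ (countable covers); $\underline{\mathcal B}^g_0(E)=\liminf_{\delta\to0}C_\delta(E)g(\delta)$. $E_x=\{y\in Y:(x,y)\in E\}$. *)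

(* Defs.v *)
From HB Require Import structures.
From mathcomp Require Import all_boot all_order all_algebra.
From mathcomp Require Import all_classical all_reals.
From mathcomp Require Import ereal topology sequences esum.
Set Implicit Arguments. Unset Strict Implicit. Unset Printing Implicit Defensive.
Import Order.TTheory GRing.Theory Num.Theory.
Local Open Scope classical_set_scope.
Local Open Scope ring_scope.

Section Defs.
Variable R : realType.

Definition is_metric (T : Type) (d : T -> T -> R) : Prop :=
  [/\ forall x y, 0 <= d x y,
      forall x y, d x y = 0 <-> x = y,
      forall x y, d x y = d y x &
      forall x y z, d x z <= d x y + d y z].

Definition max_metric (X Y : Type) (dX : X -> X -> R) (dY : Y -> Y -> R)
  : X * Y -> X * Y -> R := fun p q => Num.max (dX p.1 q.1) (dY p.2 q.2).

Definition hausdorff_fun (g : R -> R) : Prop :=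
  (forall t, 0 < t -> 0 < g t) /\ (forall s t, 0 < s -> s <= t -> g s <= g t).

Definition scale (D : set R) : Prop :=
  (forall t, D t -> 0 < t) /\ (forall e, 0 < e -> exists2 t, D t & t < e).

Variable T : choiceType.
Variable d : T -> T -> R.

Definition ecard (F : set T) : \bar R := (\esum_(x in F) 1)%E.

(* gap F = inf { d x y : x, y in F, x <> y }  (inf of empty set = +oo) *)
Definition gap (F : set T) : \bar R :=
  ereal_inf [set v | exists x y, [/\ F x, F y, x <> y & v = (d x y)%:E]].

Definition Ccap (delta : R) (E : set T) : \bar R :=
  ereal_sup [set ecard F | F in [set F | F `<=` E /\ (delta%:E < gap F)%E]].

Definition lower_box0 (g : R -> R) (E : set T) : \bar R :=
  ereal_sup [set ereal_inf [set (Ccap delta E * (g delta)%:E)%E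
                           | delta in [set delta | 0 < delta < eta]]
            | eta in [set eta : R | 0 < eta]].

(* A packing {(x, r x) : x in A}: the centres form the set A and radii are r.
   (Distinct members of a packing have distinct centres since radii are > 0.) *)
Definition packing (A : set T) (r : T -> R) : Prop :=
  (forall x, A x -> 0 < r x) /\
  (forall x y, A x -> A y -> x <> y -> r x < d x y).

Definition packing_of (E : set T) (D : set R) (delta : R) (A : set T) (r : T -> R) :=
  [/\ packing A r, A `<=` E, (forall x, A x -> D (r x)) & (forall x, A x -> r x <= delta)].

Definition gpack (g : R -> R) (A : set T) (r : T -> R) : \bar R :=
  (\esum_(x in A) (g (r x))%:E)%E.

Definition P0 (g : R -> R) (D : set R) (E : set T) : \bar R :=
  ereal_inf [set ereal_sup [set v | exists A r, packing_of E D delta A r /\ v = gpack g A r]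
            | delta in [set delta : R | 0 < delta]].

Definition Pmeas (g : R -> R) (D : set R) (E : set T) : \bar R :=
  ereal_inf [set (\sum_(n <oo) P0 g D (En n))%E
            | En in [set En : nat -> set T | E `<=` \bigcup_n En n]].

End Defs.

(* E_x is the library's classical_sets.xsection E x = [set y | (x, y) \in E]. *)

(* Main.v *)
Require Import Defs.
From HB Require Import structures.
From mathcomp Require Import all_boot all_order all_algebra.
From mathcomp Require Import all_classical all_reals.
From mathcomp Require Import ereal topology sequences esum.
From mathcomp Require Import normedtype.
From mathcomp Require Import lra zify ring.
From mathcomp Require finmap.
Import Order.TTheory GRing.Theory Num.Theory.
Local Open Scope classical_set_scope.
Local Open Scope ring_scope.
Set Implicit Arguments.
Unset Strict Implicit.
Unset Printing Implicit Defensive.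


Section Pack.
Variable R : realType.
Variable X : choiceType.
Variable d : X -> X -> R.
Variable h : R -> R.
Hypothesis hpos : forall t, 0 < t -> 0 < h t.
Variable D : set R.
Local Open Scope ereal_scope.

Definition psup (δ : R) (Z : set X) :=
  ereal_sup [set v | exists A r, packing_of d Z D δ A r /\ v = gpack h A r].

Lemma P0E Z : P0 d h D Z = ereal_inf [set psup δ Z | δ in [set δ : R | (0 < δ)%R]].
Proof. by []. Qed.

Lemma gpack_ge0 (A : set X) r : (forall x, A x -> (0 < r x)%R) -> 0 <= gpack h A r.
Proof.
move=> rp; apply: esum_ge0 => x Ax; rewrite lee_fin; apply/ltW/hpos/rp/Ax.
Qed.

Lemma psup_ub δ Z (A : set X) r : packing_of d Z D δ A r -> gpack h A r <= psup δ Z.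
Proof. by move=> pk; apply: ereal_sup_ubound; exists A, r. Qed.

Lemma psup_ge0 δ Z : 0 <= psup δ Z.
Proof.
apply: le_trans (psup_ub (A := set0) (r := fun=> 1%R) _).
  by rewrite /gpack esum_set0.
by split=> //; split.
Qed.

Lemma psup_le δ Z c :
  (forall (A : set X) r, packing_of d Z D δ A r -> gpack h A r <= c) -> psup δ Z <= c.
Proof. by move=> H; apply: ge_ereal_sup => _ [A [r [pk ->]]]; exact: H. Qed.

Lemma P0_le δ Z : (0 < δ)%R -> P0 d h D Z <= psup δ Z.
Proof. by move=> δ0; apply: ereal_inf_lbound; exists δ. Qed.

Lemma P0_ge0 Z : 0 <= P0 d h D Z.
Proof. by apply: le_ereal_inf_tmp => _ [δ _ <-]; exact: psup_ge0. Qed.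

Lemma psup_monoZ δ Z Z' : Z `<=` Z' -> psup δ Z <= psup δ Z'.
Proof.
move=> ZZ'; apply: psup_le => A r [pk AZ Dr rd]; apply: psup_ub.
by split => //; apply: subset_trans ZZ'.
Qed.

Lemma psup_monod δ δ' Z : (δ <= δ')%R -> psup δ Z <= psup δ' Z.
Proof.
move=> le; apply: psup_le => A r [pk AZ Dr rd]; apply: psup_ub.
by split => // x Ax; apply: le_trans le; exact: rd.
Qed.

Lemma P0_mono Z Z' : Z `<=` Z' -> P0 d h D Z <= P0 d h D Z'.
Proof.
move=> ZZ'; apply: le_ereal_inf_tmp => _ [δ δ0 <-].
by apply: le_trans (psup_monoZ _ ZZ'); exact: P0_le.
Qed.

Lemma P0_lb c Z η : (0 < η)%R ->
  (forall δ, (0 < δ)%R -> (δ <= η)%R -> c <= psup δ Z) -> c <= P0 d h D Z.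
Proof.
move=> η0 H; apply: le_ereal_inf_tmp => _ [δ /= δ0 <-].
have m0 : (0 < Order.min δ η)%R by rewrite lt_min δ0.
apply: le_trans (H _ m0 _) _; first by rewrite ge_min lexx orbT.
by apply: psup_monod; rewrite ge_min lexx.
Qed.

Lemma P0_set0 : P0 d h D set0 = 0.
Proof.
apply/eqP; rewrite eq_le P0_ge0 andbT.
apply: le_trans (P0_le set0 ltr01) _.
apply: psup_le => A r [pk A0 _ _].
by rewrite /gpack (_ : A = set0) ?esum_set0 //; apply/seteqP; split.
Qed.


Definition mu Z := Pmeas d h D Z.

Lemma muE Z : mu Z = ereal_inf [set (\sum_(n <oo) P0 d h D (En n))%E
            | En in [set En : nat -> set X | Z `<=` \bigcup_n En n]].
Proof. by []. Qed.

Lemma mu_ge0 Z : 0 <= mu Z.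
Proof.
apply: le_ereal_inf_tmp => _ [En _ <-].
by apply: nneseries_ge0 => n _ _; exact: P0_ge0.
Qed.

Lemma mu_mono Z Z' : Z `<=` Z' -> mu Z <= mu Z'.
Proof.
move=> ZZ'; apply: le_ereal_inf_tmp => _ [En cov <-].
by apply: ereal_inf_lbound; exists En => //; exact: subset_trans cov.
Qed.

Lemma mu_le_P0 Z : mu Z <= P0 d h D Z.
Proof.
apply: ereal_inf_lbound; exists (fun n => if n == 0%N then Z else set0).
  by move=> x Zx; exists 0%N.
rewrite nneseries_recl //; last by move=> k _; exact: P0_ge0.
rewrite /= eseries0 ?adde0 // => i i1 _.
by rewrite ifN ?P0_set0 // -lt0n.
Qed.

Lemma mu_sub (A : (set X)^nat) : mu (\bigcup_n A n) <= \sum_(i <oo) mu (A i).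
Proof.
have [[i ioo]|] := pselect (exists i, mu (A i) = +oo).
  rewrite (eseries_pinfty _ _ ioo) ?leey// => n _.
  by rewrite -ltNye (lt_le_trans _ (mu_ge0 _)).
rewrite -forallNE => Aoo.
suff add2e (e : {posnum R}) :
    mu (\bigcup_n A n) <= \sum_(i <oo) mu (A i) + e%:num%:E.
  by apply/lee_addgt0Pr => _/posnumP[].
rewrite (le_trans _ (epsilon_trick _ _ _))//; last first.
  by move=> n; exact: mu_ge0.
pose P n (B : (set X)^nat) := A n `<=` \bigcup_k B k /\
  \sum_(k <oo) P0 d h D (B k) <= mu (A n) + (e%:num / (2 ^ n.+1)%:R)%:E.
have [G PG] : {G : ((set X)^nat)^nat & forall n, P n (G n)}.
  apply: (@choice _ _ P) => n; rewrite /P muE.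
  set S := (X in ereal_inf X); move infS : (ereal_inf S) => iS.
  case: iS infS => [r Sr|Soo|Soo].
  - have en1 : (0 < e%:num / (2 ^ n.+1)%:R)%R by [].
    have /(lb_ereal_inf_adherent en1) : ereal_inf S \is a fin_num by rewrite Sr.
    move=> [x [B AnB muBx] xS].
    by exists B; split => //; rewrite muBx -Sr; exact/ltW.
  - by have := Aoo n; rewrite muE Soo.
  - suff : lbound S 0 by move/le_ereal_inf_tmp; rewrite Soo.
    by move=> /= _ [B AnB <-]; apply: nneseries_ge0 => k _ _; exact: P0_ge0.
have muG_ge0 x : 0 <= (P0 d h D \o uncurry G) x by exact: P0_ge0.
apply: (@le_trans _ _ (\esum_(i in setT) (P0 d h D \o uncurry G) i)).
  rewrite muE; apply: ereal_inf_lbound => /=.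
  have /card_esym/ppcard_eqP[f] := card_nat2.
  exists (uncurry G \o f).
    apply: (@subset_trans _  (\bigcup_n \bigcup_k G n k)) => [t [i _]|].
      by move=> /((PG i).1) -[j _ ?]; exists i => //; exists j.
    move=> t [i _ [j _ Bijt]]; exists (f^-1%FUN (i, j)) => //=.
    by rewrite invK ?inE.
  rewrite -(esum_pred_image (P0 d h D \o uncurry G) _ xpredT) ?[fun=> _]set_true//.
  by rewrite image_eq.
rewrite (_ : esum _ _ = \sum_(i <oo) \sum_(j <oo ) P0 d h D (G i j)); last first.
  pose J : nat -> set (nat * nat) := fun i => [set (i, j) | j in setT].
  rewrite (_ : setT = \bigcup_k J k); last first.
    by rewrite predeqE => -[a b]; split => // _; exists a => //; exists b.
  rewrite esum_bigcupT /=; last 2 first.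
    - apply/trivIsetP => i j _ _ ij.
      rewrite predeqE => -[n m] /=; split => //= -[] [_] _ [<-{n} _].
      by move=> [m' _] [] /esym/eqP; rewrite (negbTE ij).
    - by move=> /= [n m]; apply: P0_ge0.
  rewrite -(image_id [set: nat]) -fun_true esum_pred_image//; last first.
    by move=> n _; apply: esum_ge0 => ? _; exact: P0_ge0.
  apply: eq_eseriesr => /= j _.
  rewrite -(esum_pred_image (P0 d h D \o uncurry G) (pair j) predT)//=; last first.
    by move=> ? ? _ _; exact: (@can_inj _ _ _ snd).
  - by move=> k _; exact: P0_ge0.
  by congr esum; rewrite predeqE => -[a b]; split; move=> [i _ <-]; exists i.
apply: lee_lim.
- apply: is_cvg_nneseries => n *.
  by apply: nneseries_ge0 => m *; exact: (muG_ge0 (n, m)).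
- by apply: is_cvg_nneseries => n *; apply: adde_ge0 => //; exact: mu_ge0.
- by near=> n; apply: lee_sum => i _; exact: (PG i).2.
Unshelve. all: by end_near. Qed.

End Pack.

Section Sup.
Variable R : realType.
Local Open Scope ereal_scope.

Lemma sup_add_le (SA SB : set (\bar R)) c : SA 0 -> SB 0 ->
  (forall u v, SA u -> SB v -> u + v <= c) -> ereal_sup SA + ereal_sup SB <= c.
Proof.
move=> A0 B0 H.
have hA : ereal_sup SA <= c.
  by apply: ge_ereal_sup => u Au; rewrite -[u]adde0; exact: H.
have hB : ereal_sup SB <= c.
  by apply: ge_ereal_sup => u Au; rewrite -[u]add0e; exact: H.
have sA0 : 0 <= ereal_sup SA by exact: ereal_sup_ubound.
have sB0 : 0 <= ereal_sup SB by exact: ereal_sup_ubound.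
case: c H hA hB => [c| |] H hA hB; last 2 first.
- by rewrite leey.
- by have := le_trans sA0 hA.
have fA : ereal_sup SA \is a fin_num by rewrite ge0_fin_numE // (le_lt_trans hA) ?ltry.
have fB : ereal_sup SB \is a fin_num by rewrite ge0_fin_numE // (le_lt_trans hB) ?ltry.
apply/lee_addgt0Pr => e e0.
have e20 : (0 < e / 2)%R by rewrite divr_gt0.
have [u Au ua] := ub_ereal_sup_adherent e20 fA.
have [v Bv vb] := ub_ereal_sup_adherent e20 fB.
have := H _ _ Au Bv.
move: ua vb; rewrite -(fineK fA) -(fineK fB).
set a := fine _; set b := fine _.
case: u {Au} => [u| |]; case: v {Bv} => [v| |] //=; rewrite ?lte_fin ?lee_fin //.
move=> ua vb uv; lra.
Qed.

End Sup.

Section Sep.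
Variable R : realType.
Variable X : choiceType.
Variable d : X -> X -> R.
Hypothesis dm : is_metric d.
Variable h : R -> R.
Hypothesis hpos : forall t, 0 < t -> 0 < h t.
Variable D : set R.
Local Open Scope ereal_scope.

Lemma dsym x y : d x y = d y x.
Proof. by case: dm. Qed.
Lemma dtri x y z : (d x z <= d x y + d y z)%R.
Proof. by case: dm. Qed.
Lemma d0 x : d x x = 0%R.
Proof. by case: dm => _ H _ _; apply/H. Qed.
Lemma dge0 x y : (0 <= d x y)%R.
Proof. by case: dm. Qed.

Lemma psup0 δ Z : [set v | exists A r, packing_of d Z D δ A r /\ v = gpack h A r] 0.
Proof.
exists set0, (fun=> 1%R); split; last by rewrite /gpack esum_set0.
by split=> //; split.
Qed.

Lemma packing_union (A B PA PB : set X) rA rB δ ε : (0 < ε)%R -> (δ < ε)%R ->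
  (forall a b, A a -> B b -> ε <= d a b)%R ->
  packing_of d A D δ PA rA -> packing_of d B D δ PB rB ->
  exists r, packing_of d (A `|` B) D δ (PA `|` PB) r /\
    gpack h (PA `|` PB) r = gpack h PA rA + gpack h PB rB.
Proof.
move=> ε0 δε sep [[rA0 pA] PAA DA fA] [[rB0 pB] PBB DB fB].
have disj x : PA x -> PB x -> False.
  move=> /PAA Ax /PBB Bx; have := sep _ _ Ax Bx; rewrite d0.
  by rewrite leNgt ε0.
pose r x := if x \in PA then rA x else rB x.
have rPA x : PA x -> r x = rA x by move=> Px; rewrite /r ifT // inE.
have rPB x : PB x -> r x = rB x.
  by move=> Px; rewrite /r ifF //; apply/negbTE/negP; rewrite inE => /disj; apply.
exists r; split.
  split.
  - split.
      by move=> x [Px|Px]; [rewrite rPA //; exact: rA0|rewrite rPB //; exact: rB0].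
    move=> x y [Px|Px] [Py|Py] xy.
    + by rewrite rPA //; exact: pA.
    + rewrite rPA //; apply: lt_le_trans (sep _ _ (PAA _ Px) (PBB _ Py)).
      exact: le_lt_trans (fA _ Px) δε.
    + rewrite rPB // dsym; apply: lt_le_trans (sep _ _ (PAA _ Py) (PBB _ Px)).
      exact: le_lt_trans (fB _ Px) δε.
    + by rewrite rPB //; exact: pB.
  - by move=> x [/PAA|/PBB]; [left|right].
  - by move=> x [Px|Px]; [rewrite rPA //; exact: DA|rewrite rPB //; exact: DB].
  - by move=> x [Px|Px]; [rewrite rPA //; exact: fA|rewrite rPB //; exact: fB].
rewrite /gpack (esumID PA); last first.
  move=> x [Px|Px]; rewrite lee_fin; apply/ltW/hpos.
    by rewrite rPA //; exact: rA0.
  by rewrite rPB //; exact: rB0.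
have -> : (PA `|` PB) `&` PA = PA by apply/seteqP; split => x //; [case|move=> ?; split=> //; left].
have -> : (PA `|` PB) `&` ~` PA = PB.
  apply/seteqP; split => x; first by case=> -[].
  by move=> Px; split; [right|move=> /disj; apply].
congr (_ + _); apply: eq_esum => x Px; [by rewrite rPA|by rewrite rPB].
Qed.

Lemma P0_sep (A B : set X) ε : (0 < ε)%R ->
  (forall a b, A a -> B b -> ε <= d a b)%R ->
  P0 d h D A + P0 d h D B <= P0 d h D (A `|` B).
Proof.
move=> ε0 sep.
have η0 : (0 < ε / 2)%R by rewrite divr_gt0.
apply: (P0_lb η0) => δ δ0 δη.
have δε : (δ < ε)%R by apply: le_lt_trans δη _; rewrite ltr_pdivrMr // ltr_pMr // ltr1n.
apply: le_trans (_ : psup d h D δ A + psup d h D δ B <= _).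
  by apply: leeD; exact: P0_le.
apply: sup_add_le; try exact: psup0.
move=> _ _ [PA [rA [pkA ->]]] [PB [rB [pkB ->]]].
have [r [pk <-]] := packing_union ε0 δε sep pkA pkB.
exact: psup_ub.
Qed.

End Sep.

Section Ser.
Variable R : realType.
Local Open Scope ereal_scope.

Lemma series_sup (u : nat -> \bar R) : (forall n, 0 <= u n) ->
  \sum_(0 <= k <oo) u k = ereal_sup (range (fun n => \sum_(0 <= k < n) u k)).
Proof.
move=> u0.
have := @ereal_nondecreasing_series _ u xpredT 0%N (fun n _ _ => u0 n).
by move/ereal_nondecreasing_cvgn/cvg_lim => ->.
Qed.

Lemma ser_le (u : nat -> \bar R) c : (forall n, 0 <= u n) ->
  (forall N, \sum_(0 <= k < N) u k <= c) -> \sum_(0 <= k <oo) u k <= c.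
Proof.
by move=> u0 H; rewrite series_sup //; apply: ge_ereal_sup => _ [N _ <-].
Qed.

End Ser.

Lemma dIVT (P : nat -> Prop) K m : (K <= m)%N -> ~ P K -> P m ->
  exists k, [/\ (K <= k)%N, ~ P k & P k.+1].
Proof.
move=> + nK; elim: m => [|m IH] Km Pm.
  have K0 : K = 0%N by lia.
  by rewrite K0 in nK.
have [Pm'|nPm] := pselect (P m).
  case: (leqP K m) => Km'; first by have [k [? ? ?]] := IH Km' Pm'; exists k.
  have KK : K = m.+1 by lia.
  by rewrite KK in nK.
case: (leqP K m) => Km'; first by exists m.
have KK : K = m.+1 by lia.
  by rewrite KK in nK.
Qed.

Section Ann.
Variable R : realType.
Variable X : choiceType.
Variable d : X -> X -> R.
Hypothesis dm : is_metric d.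
Variable h : R -> R.
Hypothesis hpos : forall t, 0 < t -> 0 < h t.
Variable D : set R.

Definition s k : R := (k.+1%:R)^-1.

Lemma s_gt0 k : 0 < s k.
Proof. by rewrite /s invr_gt0 ltr0n. Qed.

Lemma s_le m k : (m <= k)%N -> s k <= s m.
Proof. by move=> mk; rewrite /s lef_pV2 ?posrE ?ltr0n // ler_nat. Qed.

Lemma s_lt m k : (m < k)%N -> s k < s m.
Proof. by move=> mk; rewrite /s ltf_pV2 ?posrE ?ltr0n // ltr_nat. Qed.

Lemma s_small e : 0 < e -> exists k, s k <= e.
Proof.
move=> e0; exists (Num.truncn e^-1); rewrite /s.
rewrite -[leRHS]invrK lef_pV2 ?posrE ?ltr0n ?invr_gt0 //.
exact/ltW/truncnS_gt.
Qed.

Definition far (F : set X) k x := forall a, F a -> s k <= d x a.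
Definition closedm (F : set X) :=
  forall x, ~ F x -> exists2 e, 0 < e & forall a, F a -> e <= d x a.

Lemma far_mono F m k x : (m <= k)%N -> far F m x -> far F k x.
Proof. by move=> mk fm a Fa; apply: le_trans (fm _ Fa); exact: s_le. Qed.

Lemma closed_far F x : closedm F -> ~ F x -> exists k, far F k x.
Proof.
move=> cF /cF [e e0 He]; have [k ke] := s_small e0.
by exists k => a Fa; apply: le_trans ke (He _ Fa).
Qed.

Lemma not_far F k x : ~ far F k x -> exists a, F a /\ d x a < s k.
Proof.
move=> nf; apply: contrapT => H; apply: nf => a Fa.
by rewrite leNgt; apply/negP => lt; apply: H; exists a.
Qed.

Section FG.
Variables F G : set X.
Hypothesis FG : F `<=` G.
Hypothesis cF : closedm F.

Definition TT K := [set x | G x /\ far F K x].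
Definition Rk k := [set x | G x /\ ~ far F k x /\ far F k.+1 x].
Definition UU (j : bool) N := [set x | exists k, [/\ (k < N)%N, odd k = j & Rk k x]].

Lemma cover_ann K : G `\` F `<=` TT K `|` \bigcup_(k in [set k | (K <= k)%N]) Rk k.
Proof.
move=> x [Gx nFx]; have [m fm] := closed_far cF nFx.
have [fK|nfK] := pselect (far F K x); first by left.
right; case: (leqP K m) => Km; last first.
  by exfalso; apply: nfK; apply: far_mono fm; exact: ltnW.
have [k [Kk nfk fk1]] := dIVT (P := fun k => far F k x) Km nfK fm.
by exists k.
Qed.

Lemma sepFT K a x : F a -> TT K x -> s K <= d a x.
Proof. by move=> Fa [_ fx]; rewrite dsym //; exact: fx. Qed.

Lemma sepU j N y x : UU j N y -> Rk N x -> odd N = j -> s N.-1 - s N <= d y x.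
Proof.
move=> [k [kN okj [_ [_ fy]]]] [_ [nfx _]] oN.
have [a [Fa xa]] := not_far nfx.
have k2 : (k.+2 <= N)%N.
  rewrite ltn_neqAle kN andbT; apply/negP => /eqP kN'.
  by move: oN; rewrite -kN' /= okj; case: j {okj}.
have sk : s N.-1 <= s k.+1 by apply: s_le; lia.
have := fy _ Fa; have := dtri dm y x a; lra.
Qed.

Lemma gapP N : (0 < N)%N -> 0 < s N.-1 - s N.
Proof. by move=> N0; rewrite subr_gt0; apply: s_lt; lia. Qed.

Lemma UU_sub j N : UU j N `<=` G.
Proof. by move=> x [k [_ _ []]]. Qed.

Local Open Scope ereal_scope.

Lemma sum_par j N :
  \sum_(0 <= k < N | odd k == j) P0 d h D (Rk k) <= P0 d h D (UU j N).
Proof.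
elim: N => [|N IH]; first by rewrite big_geq // P0_ge0.
rewrite big_mkcond big_nat_recr //= -big_mkcond /=.
have mono : UU j N `<=` UU j N.+1.
  by move=> x [k [kN ? ?]]; exists k; split => //; exact: ltnW.
case: (eqVneq (odd N) j) => oN; last first.
  by rewrite adde0; apply: le_trans IH _; exact: P0_mono.
have sub : UU j N `|` Rk N `<=` UU j N.+1.
  by move=> x [/mono //|RNx]; exists N; split.
apply: le_trans (P0_mono _ _ _ sub).
apply: le_trans (_ : P0 d h D (UU j N) + P0 d h D (Rk N) <= _); first exact: leeD2r.
case: N IH mono sub oN => [|N] IH mono sub oN.
  have -> : UU j 0 = set0 by apply/seteqP; split => // x [k []].
  by rewrite P0_set0 add0e set0U.
apply: (P0_sep dm hpos D (gapP (ltn0Sn N))) => a b Ua Rb.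
by have := sepU Ua Rb oN.
Qed.

Lemma sum_R_le N : \sum_(0 <= k < N) P0 d h D (Rk k) <= P0 d h D G + P0 d h D G.
Proof.
rewrite (bigID (fun k => odd k)) /=; apply: leeD.
  rewrite (eq_bigl (fun k => odd k == true)); last by move=> k; case: odd.
  by apply: le_trans (sum_par _ _) _; apply: P0_mono; exact: UU_sub.
rewrite (eq_bigl (fun k => odd k == false)); last by move=> k; case: odd.
by apply: le_trans (sum_par _ _) _; apply: P0_mono; exact: UU_sub.
Qed.

Lemma P0_FT K : P0 d h D F + P0 d h D (TT K) <= P0 d h D G.
Proof.
apply: le_trans (P0_sep dm hpos D (s_gt0 K) (@sepFT K)) _.
by apply: P0_mono => x [/FG|[]].
Qed.


Lemma loc e : P0 d h D G < +oo -> (0 < e)%R ->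
  exists K, mu d h D (G `\` F) <= P0 d h D (TT K) + e%:E.
Proof.
move=> Gfin e0.
set S := \sum_(0 <= k <oo) P0 d h D (Rk k).
have R0 k : 0 <= P0 d h D (Rk k) by exact: P0_ge0.
have S0 : 0 <= S by apply: nneseries_ge0 => k _ _.
have Sle : S <= P0 d h D G + P0 d h D G by apply: ser_le => // N; exact: sum_R_le.
have finS : S \is a fin_num.
  by rewrite ge0_fin_numE // (le_lt_trans Sle) // lte_add_pinfty.
have Slt : S - e%:E < S.
  by rewrite -(fineK finS) -EFinB lte_fin; lra.
have [_ [K _ <-] pK] : exists2 y, range (fun n => \sum_(0 <= k < n) P0 d h D (Rk k)) y & S - e%:E < y.
  by apply: ereal_sup_gt; rewrite -series_sup.
set p := \sum_(0 <= k < K) _ in pK.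
set t := \sum_(K <= k <oo) P0 d h D (Rk k).
have Spt : S = p + t by rewrite /S (nneseries_split 0 K) // add0n.
have p0 : 0 <= p by apply: sume_ge0.
have t0 : 0 <= t by apply: nneseries_ge0 => k _ _.
have pS : p <= S by rewrite Spt leeDl.
have tS : t <= S by rewrite Spt leeDr.
have finp : p \is a fin_num by rewrite ge0_fin_numE // (le_lt_trans pS) // -ge0_fin_numE.
have fint : t \is a fin_num by rewrite ge0_fin_numE // (le_lt_trans tS) // -ge0_fin_numE.
have te : t <= e%:E.
  have := Spt; have := pK; rewrite -(fineK finS) -(fineK finp) -(fineK fint).
  rewrite -EFinB -EFinD lte_fin => pK' [Spt']; rewrite lee_fin; lra.
exists K.
pose C j := if j == 0%N then TT K else Rk (j.-1 + K).
have cov : G `\` F `<=` \bigcup_j C j.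
  move=> x /(cover_ann K) [TKx|[k /= Kk Rkx]]; first by exists 0%N.
  exists (k - K).+1 => //; rewrite /C /= subnK //.
apply: (le_trans (mu_mono d h D cov)).
apply: (le_trans (mu_sub d h D C)).
apply: (@le_trans _ _ (P0 d h D (TT K) + t)); last exact: leeD2l.
have mu0 j : 0 <= mu d h D (C j) by exact: mu_ge0.
apply: ser_le => // -[|M]; first by rewrite big_geq // adde_ge0 // P0_ge0.
rewrite big_nat_recl //=; apply: leeD; first exact: mu_le_P0.
apply: le_trans (_ : \sum_(0 <= j < M) P0 d h D (Rk (j + K)) <= _).
  by apply: lee_sum => j _; rewrite /C /=; exact: mu_le_P0.
have -> : \sum_(0 <= j < M) P0 d h D (Rk (j + K)) =
          \sum_(0 + K <= k < M + K) P0 d h D (Rk k).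
  by rewrite big_addn addnK.
rewrite add0n /t; exact: nneseries_lim_ge.
Qed.

End FG.

Section Reg.
Local Open Scope ereal_scope.

Lemma reg (A : nat -> set X) (l : \bar R) : (forall n, A n `<=` A n.+1) ->
  (forall n, closedm (A n)) -> (forall n, P0 d h D (A n) <= l) ->
  (forall x, exists n, A n x) -> mu d h D [set: X] <= l.
Proof.
move=> Ainc Acl Al Acov.
case: l Al => [l| |] Al; last 2 first.
- by rewrite leey.
- by have := le_trans (P0_ge0 d h D (A 0%N)) (Al 0%N).
apply/lee_addgt0Pr => e e0.
pose en n := (e / (2 ^ n.+1)%:R)%R.
have en0 n : (0 < en n)%R by rewrite divr_gt0 // ltr0n expn_gt0.
have [Kf HK] : {Kf : nat -> nat & forall n,
    mu d h D (A n.+1 `\` A n) <= P0 d h D (TT (A n) (A n.+1) (Kf n)) + (en n)%:E}.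
  apply: (@choice _ _ (fun n K => mu d h D (A n.+1 `\` A n) <= P0 d h D (TT (A n) (A n.+1) K) + (en n)%:E)) => n.
  apply: (loc (Acl n)) => //; apply: le_lt_trans (Al n.+1) _; exact: ltry.
pose tn n := P0 d h D (TT (A n) (A n.+1) (Kf n)).
pose Dn n := if n is m.+1 then A m.+1 `\` A m else A 0%N.
have cov : [set: X] `<=` \bigcup_n Dn n.
  move=> x _; have [m Am] := Acov x.
  have [A0|nA0] := pselect (A 0%N x); first by exists 0%N.
  have [k [_ nAk Ak1]] := dIVT (P := fun k => A k x) (leq0n m) nA0 Am.
  by exists k.+1.
apply: (le_trans (mu_mono d h D cov)).
apply: (le_trans (mu_sub d h D Dn)).
have c2 N : P0 d h D (A 0%N) + \sum_(0 <= n < N) tn n <= P0 d h D (A N).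
  elim: N => [|N IH]; first by rewrite big_geq // adde0.
  rewrite big_nat_recr //= addeA; apply: (@le_trans _ _ (P0 d h D (A N) + tn N)); first exact: leeD2r.
  exact: P0_FT.
have c1 N : \sum_(0 <= j < N.+1) mu d h D (Dn j) <=
            P0 d h D (A 0%N) + \sum_(0 <= n < N) (tn n + (en n)%:E).
  elim: N => [|N IH].
    by rewrite big_nat1 big_geq // adde0; exact: mu_le_P0.
  rewrite (big_nat_recr N.+1 0) //= [in X in _ <= X](big_nat_recr N 0) //= addeA.
  exact: leeD.
have se N : \sum_(0 <= n < N) (en n)%:E <= e%:E.
  apply: le_trans (epsilon_trick0 xpredT (ltW e0)).
  by apply: nneseries_lim_ge => n _ _; rewrite lee_fin ltW.
apply: ser_le; first by move=> n; exact: mu_ge0.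
have l0 : 0 <= l%:E := le_trans (P0_ge0 d h D (A 0%N)) (Al 0%N).
case=> [|N]; first by rewrite big_geq // adde_ge0 // lee_fin ltW.
apply: le_trans (c1 N) _.
rewrite big_split /= addeA; apply: leeD; last exact: se.
exact: le_trans (c2 N) (Al N).
Qed.

End Reg.

End Ann.

Module FinMin.
Import finmap.

Lemma seq_min (R : realType) (T : eqType) (s : seq T) (f : T -> R) :
  (forall x, x \in s -> 0 < f x) ->
  exists2 e, 0 < e & forall x, x \in s -> e <= f x.
Proof.
elim: s => [|a s IH] H; first by exists 1.
have [e e0 He] := IH (fun x xs => H x (@mem_behead _ (a :: s) x xs)).
have fa := H a (mem_head a s).
exists (Order.min e (f a)); first by rewrite lt_min e0 fa.
move=> x; rewrite in_cons => /orP[/eqP->|xs]; first by rewrite ge_min lexx orbT.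
by rewrite ge_min He.
Qed.

Lemma fin_min (R : realType) (T : choiceType) (P : set T) (f : T -> R) :
  finite_set P -> (forall x, P x -> 0 < f x) ->
  exists2 e, 0 < e & forall x, P x -> e <= f x.
Proof.
move=> fP H.
have [e e0 He] : exists2 e : R, 0 < e & forall x : T, x \in fset_set P -> e <= f x.
  by apply: seq_min => x; rewrite in_fset_set // => xP; apply: H; exact: set_mem.
by exists e => // x Px; apply: He; rewrite in_fset_set // mem_set.
Qed.


End FinMin.
Import FinMin.
Section Clos.
Variable R : realType.
Variable X : choiceType.
Variable d : X -> X -> R.
Hypothesis dm : is_metric d.
Variable h : R -> R.
Hypothesis hpos : forall t, 0 < t -> 0 < h t.
Variable D : set R.

Definition cl (S : set X) := [set x | forall e, 0 < e -> exists2 z, S z & d x z < e].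

Lemma sub_cl S : S `<=` cl S.
Proof. by move=> x Sx e e0; exists x => //; rewrite d0. Qed.

Lemma cl_mono S S' : S `<=` S' -> cl S `<=` cl S'.
Proof. by move=> SS' x H e e0; have [z Sz xz] := H e e0; exists z => //; exact: SS'. Qed.

Lemma cl_closed S : closedm d (cl S).
Proof.
move=> x nx.
have [e e0 He] : exists2 e, 0 < e & forall z, S z -> e <= d x z.
  apply: contrapT => H; apply: nx => e e0; apply: contrapT => H'.
  by apply: H; exists e => // z Sz; rewrite leNgt; apply/negP => lt; apply: H'; exists z.
have e20 : 0 < e / 2 by rewrite divr_gt0.
exists (e / 2) => // a clA.
have [z Sz az] := clA _ e20.
have := He _ Sz; have := dtri dm x a z; lra.
Qed.

Local Open Scope ereal_scope.

Lemma psup_cl δ S : psup d h D δ (cl S) <= psup d h D δ S.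
Proof.
apply: psup_le => A r [[r0 pk] Acl DA fA].
rewrite /gpack; apply: ge_ereal_sup => _ [F [finF FA] <-].
pose P := [set p : X * X | [/\ F p.1, F p.2 & p.1 <> p.2]].
have finP : finite_set P.
  by apply: sub_finite_set (finite_setX finF finF) => p [? ? _].
have [e e0 He] := @fin_min R _ P (fun p => d p.1 p.2 - r p.1)%R finP
  (fun p '(And3 F1 F2 n12) => ltac:(rewrite subr_gt0; exact: pk (FA _ F1) (FA _ F2) n12)).
have e20 : (0 < e / 2)%R by rewrite divr_gt0.
have [φ Hφ] : {φ : X -> X & forall x, F x -> S (φ x) /\ (d x (φ x) < e / 2)%R}.
  apply: (@choice _ _ (fun x z => F x -> S z /\ (d x z < e / 2)%R)) => x.
  case: (pselect (F x)) => Fx; last by exists x.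
  by have [z Sz xz] := Acl _ (FA _ Fx) _ e20; exists z.
have farp x y : F x -> F y -> x <> y -> (r x < d (φ x) (φ y))%R.
  move=> Fx Fy xy; have := He (x, y) (And3 Fx Fy xy) => /=.
  have := dtri dm x (φ x) y; have := dtri dm (φ x) (φ y) y.
  have := (Hφ x Fx).2; have := (Hφ y Fy).2; rewrite (dsym dm y (φ y)); lra.
have φinj : set_inj F φ.
  move=> x y /set_mem Fx /set_mem Fy exy; apply: contrapT => xy.
  have := farp x y Fx Fy xy; rewrite exy d0 //.
  by have := r0 _ (FA _ Fx); lra.
pose ψ z := xget z [set x | F x /\ φ x = z].
have ψφ x : F x -> ψ (φ x) = x.
  by move=> Fx; apply: xget_unique => // y [Fy eq]; apply: φinj => //; exact: mem_set.
pose r' z := r (ψ z).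
have pk' : packing_of d S D δ (φ @` F) r'.
  split.
  - split; first by move=> _ [x Fx <-]; rewrite /r' ψφ //; exact: r0 (FA _ Fx).
    move=> _ _ [x Fx <-] [y Fy <-] nxy; rewrite /r' ψφ //.
    by apply: farp => // exy; apply: nxy; rewrite exy.
  - by move=> _ [x Fx <-]; exact: (Hφ x Fx).1.
  - by move=> _ [x Fx <-]; rewrite /r' ψφ //; exact: DA (FA _ Fx).
  - by move=> _ [x Fx <-]; rewrite /r' ψφ //; exact: fA (FA _ Fx).
apply: le_trans (psup_ub h pk'); rewrite /gpack esum_image //.
rewrite -esum_fset //; last by move=> x /set_mem Fx; rewrite lee_fin; apply/ltW/hpos/r0/FA.
by apply: le_esum => x Fx; rewrite /r' ψφ.
Qed.

Lemma P0_cl S : P0 d h D (cl S) <= P0 d h D S.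
Proof.
apply: le_ereal_inf_tmp => _ [δ δ0 <-].
by apply: le_trans (psup_cl δ S); exact: P0_le.
Qed.

End Clos.

Section EsumZ.
Variable R : realType.
Local Open Scope ereal_scope.

Lemma esumZ_ge (T : choiceType) (A : set T) (f : T -> \bar R) (c : R) : (0 < c)%R ->
  (forall x, A x -> 0 <= f x) ->
  (c%:E * (\esum_(x in A) f x) <= \esum_(x in A) (c%:E * f x))%E.
Proof.
move=> c0 f0.
pose f' x := Order.max 0 (f x).
have f'0 x : 0 <= f' x by rewrite /f' le_max lexx.
have ff' x : A x -> f' x = f x by move=> Ax; rewrite /f' max_r //; exact: f0.
rewrite (eq_esum (b := f')); last by move=> x Ax; rewrite ff'.
rewrite [X in _ <= X](eq_esum (b := fun x => c%:E * f' x)); last by move=> x Ax; rewrite ff'.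
rewrite /esum -ereal_sup_pZl //; apply: ge_ereal_sup => _ [_ [F fF <-] <-].
rewrite ge0_mule_fsumr //; apply: ereal_sup_ubound; by exists F.
Qed.

Lemma esum_cst_ge (T : choiceType) (F : set T) (c : R) : (0 < c)%R ->
  (c%:E * (\esum_(y in F) 1) <= \esum_(y in F) c%:E)%E.
Proof.
move=> c0; apply: le_trans (esumZ_ge c0 _) _ => //.
by apply: le_esum => y _; rewrite mule1.
Qed.

End EsumZ.

Section Prod.
Variable R : realType.
Variables X Y : choiceType.
Variable dX : X -> X -> R.
Variable dY : Y -> Y -> R.
Hypothesis dXm : is_metric dX.
Hypothesis dYm : is_metric dY.
Variables g h : R -> R.
Hypothesis gpos : forall t, 0 < t -> 0 < g t.
Hypothesis hpos : forall t, 0 < t -> 0 < h t.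
Variable D : set R.
Variable E : set (X * Y).
Local Open Scope ereal_scope.

Lemma prod_step (Z : set X) (b η : R) : (0 < b)%R -> (0 < η)%R ->
  (forall x, Z x -> forall δ, (0 < δ)%R -> (δ < η)%R ->
     b%:E < Ccap dY δ (xsection E x) * (g δ)%:E) ->
  b%:E * P0 dX h D Z <= P0 (max_metric dX dY) (fun t => g t * h t)%R D E.
Proof.
move=> b0 η0 HZ.
have η20 : (0 < η / 2)%R by rewrite divr_gt0.
apply: (P0_lb η20) => δ δ0 δη.
apply: (@le_trans _ _ (b%:E * psup dX h D δ Z)).
  by apply: lee_wpmul2l; [rewrite lee_fin ltW|exact: P0_le].
rewrite -ereal_sup_pZl //; apply: ge_ereal_sup => _ [_ [A [r [pk ->]]] <-].
case: pk => [[r0 pkA] AZ DA fA].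
have ex x : exists F : set Y, A x -> [/\ F `<=` xsection E x,
    (r x)%:E < gap dY F & b%:E < (g (r x))%:E * ecard R F].
  case: (pselect (A x)) => Ax; last by exists set0.
  have rx0 := r0 _ Ax.
  have rxη : (r x < η)%R.
    apply: le_lt_trans (fA _ Ax) _; apply: le_lt_trans δη _.
    by rewrite ltr_pdivrMr // ltr_pMr // ltr1n.
  have := HZ x (AZ _ Ax) _ rx0 rxη.
  rewrite muleC /Ccap -ereal_sup_pZl; last exact: gpos.
  move=> /ereal_sup_gt [_ [_ [F [FE gapF] <-] <-] lt].
  by exists F.
have [Fx HF] := choice ex.
pose A' := A `*`` Fx.
pose r' (p : X * Y) := r p.1.
have pk' : packing_of (max_metric dX dY) E D δ A' r'.
  split.
  - split; first by move=> p [Ap _]; exact: r0.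
    move=> [x y] [x' y'] [/= Ax Fy] [/= Ax' Fy'] neq; rewrite /r' /max_metric /=.
    rewrite lt_max; apply/orP.
    have [exx'|nxx'] := pselect (x = x').
      right; subst x'.
      have yy' : y <> y' by move=> eyy'; apply: neq; rewrite eyy'.
      have [_ gapF _] := HF x Ax.
      rewrite -lte_fin; apply: lt_le_trans gapF _.
      by apply: ereal_inf_lbound; exists y, y'.
    by left; exact: pkA.
  - move=> [x y] [/= Ax Fy]; have [FE _ _] := HF x Ax.
    by have := FE _ Fy; rewrite /xsection /= => /set_mem.
  - by move=> p [Ap _]; exact: DA.
  - by move=> p [Ap _]; exact: fA.
apply: le_trans (psup_ub (fun t => g t * h t)%R pk').
have -> : gpack (fun t => g t * h t)%R A' r' =
    \esum_(x in A) \esum_(y in Fx x) (g (r x) * h (r x))%:E.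
  rewrite esum_esum //; move=> x y Ax _; rewrite lee_fin; apply/ltW/mulr_gt0.
    exact/gpos/r0. exact/hpos/r0.
apply: le_trans (esumZ_ge b0 _) _.
  by move=> x Ax; rewrite lee_fin; apply/ltW/hpos/r0.
apply: le_esum => x Ax.
have [_ _ lt] := HF x Ax.
have gh0 : (0 < g (r x) * h (r x))%R by apply: mulr_gt0; [exact/gpos/r0|exact/hpos/r0].
apply: le_trans (esum_cst_ge _ gh0).
rewrite -/(ecard R (Fx x)) EFinM muleAC; apply: lee_wpmul2r.
  by rewrite lee_fin; apply/ltW/hpos/r0.
exact: ltW.
Qed.

End Prod.

Section Comb.
Variable R : realType.
Local Open Scope ereal_scope.

Lemma combine (M B L : \bar R) : 0 <= M -> 0 <= B -> 0 <= L ->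
  (forall b : R, (0 < b)%R -> b%:E < B -> M * b%:E <= L) -> M * B <= L.
Proof.
move=> M0 B0 L0 H.
have [->|Bpos] := eqVneq B 0; first by rewrite mule0.
have {Bpos} Bp : 0 < B by rewrite lt_def Bpos B0.
have [b0 [b0p b0B]] : exists b : R, (0 < b)%R /\ b%:E < B.
  case: B Bp {B0 H} => [β| |] Bp //.
    rewrite lte_fin in Bp; exists (β / 2)%R; split; [by rewrite divr_gt0|rewrite lte_fin ltr_pdivrMr //; lra].
  by exists 1%R; split; rewrite ?ltry.
case: L L0 H => [l| |] L0 H; last 2 first.
- by rewrite leey.
- by [].
case: M M0 H => [m| |] M0 H; last 2 first.
- by have := H _ b0p b0B; rewrite gt0_mulye ?lte_fin.
- by [].
have [->|mpos] := eqVneq m 0%R; first by rewrite mul0e.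
have mp : (0 < m)%R by rewrite lt_def mpos -lee_fin.
rewrite lee_fin in L0.
case: B Bp B0 H b0B => [β| |] Bp B0 H b0B; last 2 first.
- exfalso; have b1p : (0 < (l + 1) / m)%R by rewrite divr_gt0 //; lra.
  have := H _ b1p (ltry _); rewrite -EFinM lee_fin mulrC divfK ?gt_eqF //; lra.
- by [].
rewrite -EFinM lee_fin; rewrite lte_fin in Bp.
apply: contraTT isT; rewrite -ltNge => lt.
have lmβ : (l / m < β)%R by rewrite ltr_pdivrMr // mulrC.
have lm0 : (0 <= l / m)%R by rewrite divr_ge0 // ltW.
have bp : (0 < (l / m + β) / 2)%R by rewrite divr_gt0 //; lra.
have := H _ bp; rewrite lte_fin -EFinM lee_fin => H'.
have : ((l / m + β) / 2 < β)%R by lra.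
have e : (m * ((l / m + β) / 2) = (l + m * β) / 2)%R by field; rewrite gt_eqF.
move=> /H'; rewrite e => ?; lra.
Qed.

End Comb.

Section Key.
Variable R : realType.
Variables X Y : choiceType.
Variable dX : X -> X -> R.
Variable dY : Y -> Y -> R.
Hypothesis dXm : is_metric dX.
Variables g h : R -> R.
Hypothesis gpos : forall t, 0 < t -> 0 < g t.
Hypothesis hpos : forall t, 0 < t -> 0 < h t.
Variable D : set R.
Variable E : set (X * Y).
Local Open Scope ereal_scope.

Lemma Ccap_ge0 δ (F : set Y) : (0 <= δ)%R -> 0 <= Ccap dY δ F.
Proof.
move=> δ0; apply: le_ereal_sup_tmp; exists 0 => //; exists set0; last by rewrite /ecard esum_set0.
split => //; rewrite /gap.
have -> : [set v | exists x y, [/\ (set0 : set Y) x, set0 y, x <> y & v = (dY x y)%:E]] = set0.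
  by apply/seteqP; split => // v [x [y []]].
by rewrite ereal_inf0 ltry.
Qed.

Lemma lb_ge0 (F : set Y) : 0 <= lower_box0 dY g F.
Proof.
apply: le_ereal_sup_tmp; exists (ereal_inf [set (Ccap dY delta F * (g delta)%:E)
    | delta in [set delta | (0 < delta < 1)%R]]).
  by exists 1%R => //=.
apply: le_ereal_inf_tmp => _ [δ /andP[δ0 _] <-].
by apply: mule_ge0; [exact/Ccap_ge0/ltW|rewrite lee_fin; exact/ltW/gpos].
Qed.

Lemma key (b : R) : (0 < b)%R ->
  b%:E < ereal_inf [set lower_box0 dY g (xsection E x) | x in [set: X]] ->
  Pmeas dX h D [set: X] * b%:E <= P0 (max_metric dX dY) (fun t => g t * h t)%R D E.
Proof.
move=> b0 bB.
set L := P0 _ _ _ _.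
pose Sn n := [set x | forall δ, (0 < δ)%R -> (δ < s R n)%R ->
  b%:E < Ccap dY δ (xsection E x) * (g δ)%:E].
have Sinc n : Sn n `<=` Sn n.+1.
  move=> x Sx δ δ0 δn; apply: Sx => //; apply: lt_le_trans δn _; exact: s_le.
have Scov x : exists n, Sn n x.
  have : b%:E < lower_box0 dY g (xsection E x).
    by apply: lt_le_trans bB _; apply: ereal_inf_lbound; exists x.
  move=> /ereal_sup_gt [_ [eta eta0 <-] lt].
  have [n sn] := s_small eta0.
  exists n => δ δ0 δn; apply: lt_le_trans lt _; apply: ereal_inf_lbound.
  by exists δ => //; rewrite /= δ0 /=; exact: lt_le_trans sn.
have stepn n : b%:E * P0 dX h D (cl dX (Sn n)) <= L.
  apply: le_trans (prod_step dX gpos hpos D (b0) (s_gt0 R n) (fun x Sx => Sx)).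
  by apply: lee_wpmul2l; [rewrite lee_fin ltW|exact: P0_cl].
have := @reg R X dX dXm h hpos D (fun n => cl dX (Sn n)) (b^-1%:E * L)
  (fun n => cl_mono (Sinc n)) (fun n => cl_closed dXm (S := Sn n))
  (fun n => ltac:(rewrite lee_pdivlMl //; exact: stepn n))
  (fun x => let: ex_intro n Sx := Scov x in ex_intro _ n (sub_cl dXm Sx)).
by rewrite lee_pdivlMl // muleC.
Qed.

End Key.

Theorem lemma3p1 (R : realType) (X Y : choiceType)
  (dX : X -> X -> R) (dY : Y -> Y -> R) (D : set R) (g h : R -> R)
  (E : set (X * Y)) :
  is_metric dX -> is_metric dY -> scale D -> hausdorff_fun g -> hausdorff_fun h ->
  (P0 (max_metric dX dY) (fun t => (g t * h t)%R) D E >=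
   Pmeas dX h D [set: X] *
   ereal_inf [set lower_box0 dY g (xsection E x) | x in [set: X]])%E.
Proof.
move=> dXm dYm scD [gpos _] [hpos _].
apply: combine.
- exact: mu_ge0.
- by apply: le_ereal_inf_tmp => _ [x _ <-]; exact: lb_ge0.
- exact: P0_ge0.
- by move=> b b0 bB; exact: key.
Qed.
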